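(* For every positive integer $k$, \[ \sum_{i+t\le\lfloor k/2\rfloor}B_{2t}\,2^{2t}\binom{2k+2}{2t,\;2i+1,\;2k-2t-2i+1}=(k+1)\left(2^{2k}+(-1)^k\binom{2k}{k}\right), \] where the sum ranges over all pairs of nonnegative integers $i,t$ with $i+t\le\lfloor k/2\rfloor$.
   Context: The Bernoulli numbers $B_m$ ($m\ge 0$) are defined by $\dfrac{x}{e^x-1}=\sum_{m=0}^\infty B_m\dfrac{x^m}{m!}$. The trinomial coefficient is $\binom{n}{r_1,r_2,r_3}=\dfrac{n!}{r_1!\,r_2!\,r_3!}$ for nonnegative integers $r_1+r_2+r_3=n$. *)

(* Defs.v *)
From HB Require Import structures.
From mathcomp Require Import all_boot all_order all_algebra.
Set Implicit Arguments. Unset Strict Implicit. Unset Printing Implicit Defensive.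
Import Order.TTheory GRing.Theory Num.Theory.
Local Open Scope ring_scope.

(* Bernoulli numbers via the generating function x/(e^x-1) = sum B_m x^m/m!.
   Since (e^x-1)/x = sum_n x^n/(n+1)!, the identity
     (sum_m B_m x^m/m!) * (sum_n x^n/(n+1)!) = 1
   holds coefficientwise, i.e. B_0 = 1 and for m >= 1
     sum_{j=0}^{m} B_j / (j! (m-j+1)!) = 0,
   which determines B_m recursively:
     B_m = - m! * sum_{j<m} B_j / (j! (m-j+1)!).
   bern_list m = [:: B_0; ...; B_m]. *)
Fixpoint bern_list (m : nat) : seq rat :=
  match m with
  | 0 => [:: 1]
  | m'.+1 =>
      let s := bern_list m' in
      rcons s (- (m'.+1)`!%:R *
               \sum_(j < m'.+1) s`_j / ((j`!)%:R * ((m'.+1 - j).+1)`!%:R))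
  end.

Definition bernoulli (m : nat) : rat := (bern_list m)`_m.

Definition trinomial (n r1 r2 r3 : nat) : rat :=
  (n`!)%:R / ((r1`!)%:R * (r2`!)%:R * (r3`!)%:R).

(* Main.v *)
Require Import Defs.
From HB Require Import structures.
From mathcomp Require Import all_boot all_order all_algebra.
From mathcomp Require Import ring lra zify.
Import Order.TTheory GRing.Theory Num.Theory.
Local Open Scope ring_scope.

Lemma bern_list_size m : size (bern_list m) = m.+1.
Proof. elim: m => [//|m IH] /=; by rewrite size_rcons IH. Qed.

Lemma bern_list_nth m j : (j <= m)%N -> (bern_list m)`_j = bernoulli j.
Proof.
elim: m j => [|m IH] j hj.
  by move: hj; rewrite leqn0 => /eqP ->.
rewrite leq_eqVlt in hj; case/orP: hj => [/eqP -> //| hj].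
rewrite /= nth_rcons bern_list_size hj. exact: IH.
Qed.

Lemma bern_rec m : bernoulli m.+1 = - (m.+1)`!%:R *
   \sum_(j < m.+1) bernoulli j / ((j`!)%:R * ((m.+1 - j).+1)`!%:R).
Proof.
rewrite /bernoulli /= nth_rcons bern_list_size ltnn eqxx.
congr (_ * _); apply: eq_bigr => j _; rewrite bern_list_nth //; by rewrite -ltnS.
Qed.

Lemma fact_neq0 n : (n`!)%:R != 0 :> rat.
Proof. by rewrite pnatr_eq0 -lt0n fact_gt0. Qed.

Definition b j := bernoulli j / (j`!)%:R.

Lemma brec n : (0 < n)%N -> \sum_(j < n) b j / ((n - j)`!)%:R = (n == 1%N)%:R.
Proof.
case: n => [//|[|m]] _.
  by rewrite big_ord1 /b /bernoulli /= subn0 !divr1.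
rewrite big_ord_recr /= subSnn /= divr1.
rewrite {2}/b bern_rec.
rewrite mulrAC mulNr mulrV ?unitfE ?fact_neq0 // mulN1r; apply/eqP; rewrite subr_eq0; apply/eqP.
apply: eq_bigr => j _.
rewrite /b subSn; last by rewrite ltnW.
by rewrite invfM mulrA.
Qed.
Definition eqN N (p q : {poly rat}) := forall m, (m < N)%N -> p`_m = q`_m.
Definition tr N (f : nat -> rat) : {poly rat} := \poly_(i < N) f i.

Lemma trE N f m : (m < N)%N -> (tr N f)`_m = f m.
Proof. by rewrite /tr coef_poly => ->. Qed.

Lemma eqN_refl N p : eqN N p p. Proof. by []. Qed.
Lemma eqN_eq N p q : p = q -> eqN N p q. Proof. by move=> ->. Qed.
Lemma eqN_sym N p q : eqN N p q -> eqN N q p.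
Proof. by move=> H m hm; rewrite H. Qed.
Lemma eqN_trans N p q r : eqN N p q -> eqN N q r -> eqN N p r.
Proof. by move=> H1 H2 m hm; rewrite H1 // H2. Qed.
Lemma eqN_add N p q r s : eqN N p q -> eqN N r s -> eqN N (p + r) (q + s).
Proof. by move=> H1 H2 m hm; rewrite !coefD H1 // H2. Qed.
Lemma eqN_opp N p q : eqN N p q -> eqN N (- p) (- q).
Proof. by move=> H1 m hm; rewrite !coefN H1. Qed.
Lemma eqN_mull N p q r : eqN N p q -> eqN N (r * p) (r * q).
Proof.
move=> H m hm; rewrite !coefM; apply: eq_bigr => j _; rewrite H //.
exact: leq_ltn_trans (leq_subr _ _) hm.
Qed.
Lemma eqN_mul N p q r s : eqN N p q -> eqN N r s -> eqN N (p * r) (q * s).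
Proof.
move=> H1 H2; apply: eqN_trans (@eqN_mull N _ _ p H2) _.
by rewrite mulrC [q * s]mulrC; apply: eqN_mull.
Qed.

Arguments eqN_mull {N p q} r. Arguments eqN_mul {N p q r s}. Arguments eqN_add {N p q r s}.
Arguments eqN_trans {N p q r}. Arguments eqN_sym {N p q}. Arguments eqN_opp {N p q}. Arguments eqN_eq {N p q}.

Lemma binsum (x y : rat) m : \sum_(j < m.+1) x ^+ (m - j) * y ^+ j / ((j`!)%:R * ((m - j)`!)%:R)
  = (x + y) ^+ m / (m`!)%:R.
Proof.
rewrite exprDn mulr_suml; apply: eq_bigr => j _.
have hj : (j <= m)%N by rewrite -ltnS.
have H : ('C(m, j))%:R = (m`!)%:R / ((j`!)%:R * ((m - j)`!)%:R) :> rat.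
  by rewrite -(bin_fact hj) !natrM mulfK // mulf_neq0 // fact_neq0.
rewrite -(mulr_natr (x ^+ (m - j) * y ^+ j)) -mulrA H.
have := fact_neq0 m; have := fact_neq0 j; have := fact_neq0 (m - j).
move=> h1 h2 h3; field.
by rewrite h1 h2 h3.
Qed.

Lemma coefMtr N f g m : (m < N)%N ->
  (tr N f * tr N g)`_m = \sum_(j < m.+1) f j * g (m - j)%N.
Proof.
move=> hm; rewrite coefM; apply: eq_bigr => j _.
have hj : (j < N)%N by apply: leq_ltn_trans hm; rewrite -ltnS.
have hmj : (m - j < N)%N by exact: leq_ltn_trans (leq_subr _ _) hm.
by rewrite !trE.
Qed.

Definition e (i : nat) : rat := (i`!%:R)^-1.
Definition em (i : nat) : rat := (-1) ^+ i / i`!%:R.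
Definition e2 (i : nat) : rat := 2%:R ^+ i / i`!%:R.

Lemma F3 N : eqN N (tr N e2) (tr N e * tr N e).
Proof.
move=> m hm; rewrite coefMtr // trE // /e2.
have := binsum 1 1 m; rewrite -(natrD _ 1 1) => <-.
apply: eq_bigr => j _; rewrite !expr1n /e; have := fact_neq0 j; have := fact_neq0 (m - j).
move=> h1 h2; field; by rewrite h1 h2.
Qed.

Lemma F4 N : eqN N (tr N e * tr N em) 1.
Proof.
move=> m hm; rewrite coefMtr // coef1.
have := binsum (-1) 1 m; rewrite addNr expr0n.
have -> : ((m == 0%N)%:R / m`!%:R) = (m == 0%N)%:R :> rat.
  by case: eqP => [->|_]; rewrite ?mul0r // mul1r (_ : 0`! = 1%N) // invr1.
move=> <-; apply: eq_bigr => j _; rewrite !expr1n /e /em; have := fact_neq0 j; have := fact_neq0 (m - j).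
move=> h1 h2; field; by rewrite h1 h2.
Qed.

Definition h (i : nat) : rat := 2%:R ^+ i * b i.

Lemma F2 N : eqN N (tr N h * (tr N e2 - 1)) ('X + 'X).
Proof.
move=> m hm; rewrite coefM coefD coefX.
have -> : \sum_(j < m.+1) (tr N h)`_j * (tr N e2 - 1)`_(m - j)
   = \sum_(j < m.+1) h j * (e2 (m - j) - (m - j == 0)%N%:R).
  apply: eq_bigr => j _.
  have hj : (j < N)%N by apply: leq_ltn_trans hm; rewrite -ltnS.
  have hmj : (m - j < N)%N by exact: leq_ltn_trans (leq_subr _ _) hm.
  by rewrite coefB coef1 !trE.
rewrite big_ord_recr /= subnn /e2 /= expr0 (_ : 0`! = 1%N) // divr1 subrr mulr0 addr0.
have -> : \sum_(i < m) h i * (2%:R ^+ (m - i) / (m - i)`!%:R - (m - i == 0)%N%:R)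
   = 2%:R ^+ m * \sum_(i < m) b i / (m - i)`!%:R.
  rewrite mulr_sumr; apply: eq_bigr => i _.
  have hi : (i < m)%N := ltn_ord i.
  rewrite (_ : (m - i == 0)%N = false); last by apply/eqP; lia.
  have -> : 2%:R ^+ m = 2%:R ^+ i * 2%:R ^+ (m - i) :> rat.
    by rewrite -exprD subnKC // ltnW.
  rewrite subr0 /h; ring.
case: m hm => [|m] hm; first by rewrite big_ord0 mulr0 addr0.
rewrite brec //; case: m {hm} => [|m] /=; first by rewrite expr1 mulr1.
by rewrite mulr0.
Qed.

Lemma S1 N : eqN N (tr N e - tr N em) ((tr N e2 - 1) * tr N em).
Proof.
apply: eqN_sym.
have -> : (tr N e2 - 1) * tr N em = tr N e2 * tr N em - tr N em by ring.
apply: eqN_add; last exact: eqN_refl.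
apply: eqN_trans (eqN_mul (F3 N) (eqN_refl N (tr N em))) _.
rewrite -mulrA.
apply: eqN_trans (eqN_mull (tr N e) (F4 N)) _.
by rewrite mulr1; apply: eqN_refl.
Qed.

Lemma Main N : eqN N ((tr N h + 'X) * (tr N e - tr N em)) ('X * (tr N e + tr N em)).
Proof.
have S2 : eqN N (tr N h * (tr N e - tr N em)) (('X + 'X) * tr N em).
  apply: eqN_trans (eqN_mull (tr N h) (S1 N)) _.
  rewrite mulrA; exact: eqN_mul (F2 N) (eqN_refl N _).
rewrite mulrDl.
apply: eqN_trans (eqN_add S2 (eqN_refl N ('X * (tr N e - tr N em)))) _.
apply: eqN_eq; ring.
Qed.

Definition cc (i : nat) : rat := h i + (i == 1)%N%:R.

Lemma sgn k : (-1) ^+ k = (if odd k then -1 else 1) :> rat.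
Proof. by rewrite -signr_odd; case: (odd k). Qed.

Lemma coefMain m : \sum_(i < m.+1) cc i * ((1 - (-1) ^+ (m - i)) / (m - i)`!%:R)
   = if m is m'.+1 then (1 + (-1) ^+ m') / m'`!%:R else 0.
Proof.
have H := Main m.+1 m (ltnSn m); rewrite coefM coefXM in H.
rewrite (_ : \sum_(i < m.+1) _ = \sum_(j < m.+1) (tr m.+1 h + 'X)`_j * (tr m.+1 e - tr m.+1 em)`_(m - j)); last first.
  apply: eq_bigr => i _.
have hi : (i < m.+1)%N := ltn_ord i.
have hmi : (m - i < m.+1)%N by rewrite ltnS leq_subr.
  rewrite coefD coefX coefB !trE // /cc /e /em; ring.
rewrite H; case: m H => [|m] H //=.
by rewrite coefD !trE // /e /em; ring.
Qed.

Lemma cc_odd n : odd n -> cc n = 0.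
Proof.
elim: n {-2}n (leqnn n) => [|N IH] n hn hodd; first by move: hn; rewrite leqn0 => /eqP hn; subst n.
have := coefMain n.+1.
rewrite big_ord_recr /= subnn expr0 subrr mul0r mulr0 addr0.
rewrite big_ord_recr /= subSnn expr1 (_ : 1`! = 1%N) // divr1.
rewrite sgn hodd addrN mul0r big1 ?add0r; last first.
  move=> i _.
  have hi : (i < n)%N := ltn_ord i.
  case ho : (odd i); first by rewrite IH ?mul0r //; lia.
  rewrite sgn oddB /= ?hodd ?ho; last by lia.
  by rewrite subrr mul0r mulr0.
move/eqP; rewrite mulf_eq0 => /orP [/eqP //|].
by rewrite opprK (_ : 1 + 1 = 2%:R :> rat) // pnatr_eq0.
Qed.

Lemma parity_split (F : nat -> rat) j :
  \sum_(i < (2 * j).+2) F i = \sum_(t < j.+1) (F (2 * t)%N + F (2 * t).+1).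
Proof.
elim: j => [|j IH].
  by rewrite big_ord_recr big_ord_recr big_ord0 big_ord_recr big_ord0 /= !add0r.
rewrite (_ : (2 * j.+1).+2 = ((2 * j).+2).+2); last by lia.
rewrite big_ord_recr big_ord_recr /= IH [in RHS]big_ord_recr /= -addrA.
by rewrite (_ : (2 * j.+1)%N = (2 * j).+2) //; lia.
Qed.

Lemma key j : \sum_(t < j.+1) cc (2 * t) / (2 * j + 1 - 2 * t)`!%:R = ((2 * j)`!%:R)^-1.
Proof.
have := coefMain (2 * j).+1.
rewrite (parity_split (fun i => cc i * ((1 - (-1) ^+ ((2 * j).+1 - i)) / ((2 * j).+1 - i)`!%:R))).
rewrite sgn (_ : odd (2 * j) = false); last by rewrite oddM.
move=> H.
have h2 : 2%:R != 0 :> rat by rewrite pnatr_eq0.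
apply: (mulfI h2).
rewrite (_ : 2%:R * ((2 * j)`!%:R)^-1 = (1 + 1) / (2 * j)`!%:R); last by rewrite mulrC.
rewrite -H mulr_sumr; apply: eq_bigr => t _.
have ht : (t < j.+1)%N := ltn_ord t.
rewrite (@cc_odd (2 * t).+1); last by rewrite /= oddM.
rewrite mul0r addr0 sgn oddB ?oddM /=; last by lia.
rewrite oddM /= addn1 opprK.
rewrite (_ : 1 + 1 = 2%:R :> rat) //; ring.
Qed.
Lemma sumC n : \sum_(l < n.+1) ('C(n, l))%:R = 2%:R ^+ n :> rat.
Proof.
rewrite (_ : 2%:R = 1 + 1 :> rat) // exprDn; apply: eq_bigr => i _.
by rewrite !expr1n mul1r.
Qed.

Lemma halfsym k : 2%:R * \sum_(l < k) ('C(2 * k, l))%:R + ('C(2 * k, k))%:R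
   = 2%:R ^+ (2 * k) :> rat.
Proof.
rewrite -sumC (_ : (2 * k).+1 = (k + k.+1)%N); last by lia.
rewrite big_split_ord /= big_ord_recl /= addn0.
have -> : \sum_(i < k) ('C(2 * k, k + bump 0 i))%:R = \sum_(i < k) ('C(2 * k, i))%:R :> rat.
  rewrite [RHS](reindex_inj rev_ord_inj) /=; apply: eq_bigr => i _.
  have hi : (i < k)%N := ltn_ord i.
  rewrite -(bin_sub (n := (2 * k)%N) (m := (k - i.+1)%N)); last by lia.
  by congr ('C(_, _) %:R); rewrite /bump /=; lia.
ring.
Qed.

Lemma oddsum_split k m : \sum_(j < m.+1) ('C((2 * k).+1, 2 * j))%:R
   = \sum_(l < (2 * m).+1) ('C(2 * k, l))%:R :> rat.
Proof.
pose F (i : nat) : rat := if i is i'.+1 then ('C(2 * k, i'))%:R else 0.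
have -> : \sum_(l < (2 * m).+1) ('C(2 * k, l))%:R = \sum_(i < (2 * m).+2) F i.
  rewrite [RHS]big_ord_recl /F /= add0r; apply: eq_bigr => i _.
  by rewrite add0n.
rewrite (parity_split F); apply: eq_bigr => t _ /=.
case: t => [[|t] ht]; rewrite /F /=; first by rewrite add0r !bin0.
rewrite (_ : (2 * t.+1)%N = (2 * t).+2); last by lia.
rewrite binS natrD addrC; congr (_ + _); congr ('C(_, _)%:R); lia.
Qed.

Lemma oddbinsum k : 2%:R * \sum_(j < (k./2).+1) ('C((2 * k).+1, 2 * j))%:R
   = 2%:R ^+ (2 * k) + (-1) ^+ k * ('C(2 * k, k))%:R :> rat.
Proof.
rewrite oddsum_split -halfsym.
have := odd_double_half k; case: (odd k) => /= hk.
  rewrite -signr_odd (_ : odd k = true) /=; last by rewrite -hk /= odd_double.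
  rewrite (_ : (2 * k./2).+1 = k) ?mul2n //; ring.
rewrite -signr_odd (_ : odd k = false) /=; last by rewrite -hk odd_double.
rewrite (_ : (2 * k./2).+1 = k.+1); last by move: hk; rewrite add0n mul2n => ->.
rewrite big_ord_recr /=; ring.
Qed.

Lemma triangle (F : nat -> nat -> rat) m :
  \sum_(t < m.+1) \sum_(i < (m - t).+1) F (t + i)%N t
  = \sum_(j < m.+1) \sum_(t < j.+1) F j t.
Proof.
elim: m => [|m IH].
  by rewrite !big_ord1.
rewrite big_ord_recr subnn big_ord1 addn0 /=.
rewrite [RHS]big_ord_recr /= -IH [X in _ = _ + X]big_ord_recr /= addrA; congr (_ + _).
rewrite -big_split /=; apply: eq_bigr => t _.
have ht : (t < m.+1)%N := ltn_ord t.
rewrite subSn; last by rewrite -ltnS.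
rewrite big_ord_recr /=; congr (_ + F _ _); lia.
Qed.

Theorem lemma1 (k : nat) (hk : (0 < k)%N) :
  \sum_(t < (k./2).+1) \sum_(i < (k./2 - t).+1)
     bernoulli (2 * t) * 2%:R ^+ (2 * t)
       * trinomial (2 * k + 2) (2 * t) (2 * i + 1) (2 * k - 2 * t - 2 * i + 1)
  = (k.+1)%:R * (2%:R ^+ (2 * k) + (-1) ^+ k * ('C(2 * k, k))%:R).
Proof.
have hm : (2 * k./2 <= k)%N.
  by rewrite -{2}(odd_double_half k) mul2n leq_addl.
set m := k./2 in hm *.
pose K j t := cc (2 * t) / (2 * j + 1 - 2 * t)`!%:R
              * ((2 * k + 2)`!%:R / (2 * k - 2 * j + 1)`!%:R).
rewrite (eq_bigr (fun t : 'I_m.+1 => \sum_(i < (m - t).+1) K (t + i)%N t)); last first.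
  move=> t _; apply: eq_bigr => i _.
  have hti : (t + i <= m)%N by have := ltn_ord i; have := ltn_ord t; lia.
  rewrite /K /cc /h /b /trinomial.
  rewrite (_ : (2 * t == 1)%N = false); last by apply/eqP; lia.
  rewrite (_ : (2 * (t + i) + 1 - 2 * t)%N = (2 * i + 1)%N); last by lia.
  rewrite (_ : (2 * k - 2 * (t + i) + 1)%N = (2 * k - 2 * t - 2 * i + 1)%N); last by lia.
  have := fact_neq0 (2 * t); have := fact_neq0 (2 * i + 1);
  have := fact_neq0 (2 * k - 2 * t - 2 * i + 1).
  move=> h1 h2 h3; rewrite (_ : (false)%:R = 0 :> rat) ?addr0 //.
  field.
  by rewrite h1 h2 h3.
rewrite (triangle K m).
rewrite (eq_bigr (fun j : 'I_m.+1 => (2 * k + 2)%:R * ('C((2 * k).+1, 2 * j))%:R)); last first.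
  move=> j _.
  have hj : (j <= m)%N by rewrite -ltnS.
  rewrite /K -mulr_suml key.
  have hjk : (2 * j <= (2 * k).+1)%N by lia.
  have HC := bin_fact hjk.
  rewrite (_ : (2 * k - 2 * j + 1)%N = ((2 * k).+1 - 2 * j)%N); last by lia.
  rewrite (_ : (2 * k + 2)%N = ((2 * k).+1).+1); last by lia.
  rewrite factS -HC !natrM.
  have := fact_neq0 (2 * j); have := fact_neq0 ((2 * k).+1 - 2 * j).
  move=> h1 h2; field.
  by rewrite h1 h2.
rewrite -mulr_sumr.
rewrite (_ : (2 * k + 2)%:R = (k.+1)%:R * 2%:R :> rat); last by rewrite -natrM; congr (_%:R); lia.
by rewrite -mulrA oddbinsum.
Qed.
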